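(* Let $f$ be a $C^\infty$ function near $0\in\mathbb R^n$ with $\Gamma_+(f)\ne\emptyset$, let $\Sigma$ be a simplicial subdivision of the fan $\Sigma_0$ associated with $\Gamma_+(f)$, and for each $n$-dimensional cone $\sigma\in\Sigma^{(n)}$ with skeleton $a^1(\sigma),\dots,a^n(\sigma)$ set $$A(\sigma)=\Big\{j\in\{1,\dots,n\}:\ l(a^j(\sigma))\ne0,\ -\frac{\langle a^j(\sigma)\rangle}{l(a^j(\sigma))}=-\frac1{d(f)}\Big\}.$$ Then $m(f)=\max\{\#A(\sigma):\sigma\in\Sigma^{(n)}\}$.
   Context: $\langle a\rangle=a_1+\dots+a_n$; $H(a,l)=\{x:\langle a,x\rangle=l\}$. Newton polyhedron $\Gamma_+(f)$: convex hull of $\bigcup\{\alpha+\mathbb R_+^n:c_\alpha\ne0\}$, $c_\alpha$ Taylor coefficients of $f$ at $0$. $d(f)$: $(d(f),\dots,d(f))$ is where the diagonal meets $\partial\Gamma_+(f)$; principal face $\tau_*$: face of $\Gamma_+(f)$ whose relative interior contains that point; $m(f)=n-\dim\tau_*$. Fan: with $P=\Gamma_+(f)$, $l(a)=\min\{\langle a,\alpha\rangle:\alpha\in P\}$ for $a\in\mathbb R_+^n$. For each face $\gamma$ of $P$, $\gamma^*=\{a\in\mathbb R_+^n:H(a,l(a))\cap P=\gamma\}$; closures of the $\gamma^*$ form the fan $\Sigma_0$ (support $\mathbb R_+^n$). A simplicial subdivision $\Sigma$ is a fan with the same support, each cone lying in a cone of $\Sigma_0$, whose every cone's skeleton (primitive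 integer vectors on its edges) can be completed to a basis of $\mathbb Z^n$. $\Sigma^{(n)}$ is the set of $n$-dimensional cones; the skeleton of $\sigma\in\Sigma^{(n)}$ consists of $n$ vectors $a^1(\sigma),\dots,a^n(\sigma)\in\mathbb Z_+^n$. *)

(* Defs.v *)
From HB Require Import structures.
From mathcomp Require Import all_boot all_order all_algebra.
Set Implicit Arguments. Unset Strict Implicit. Unset Printing Implicit Defensive.
Import Order.TTheory GRing.Theory Num.Theory.
Local Open Scope ring_scope.

Section NewtonDefs.
Variables (R : realFieldType) (n : nat).

Definition pt := 'rV[R]_n.

Definition dotv (a x : pt) : R := \sum_(i < n) a ord0 i * x ord0 i.
(* <a> = a_1 + ... + a_n *)
Definition sumv (a : pt) : R := \sum_(i < n) a ord0 i.

Definition near_pt (e : R) (x y : pt) : Prop :=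
  forall i : 'I_n, `|y ord0 i - x ord0 i| < e.

Definition closure (A : pt -> Prop) (x : pt) : Prop :=
  forall e, 0 < e -> exists y, A y /\ near_pt e x y.

Definition on_boundary (A : pt -> Prop) (x : pt) : Prop :=
  (forall e, 0 < e -> exists y, A y /\ near_pt e x y) /\
  (forall e, 0 < e -> exists y, ~ A y /\ near_pt e x y).

Definition conv (A : pt -> Prop) (x : pt) : Prop :=
  exists (m : nat) (lam : 'I_m -> R) (p : 'I_m -> pt),
    (forall k, 0 <= lam k) /\ \sum_(k < m) lam k = 1 /\
    (forall k, A (p k)) /\ x = \sum_(k < m) lam k *: p k.

Definition in_aff (A : pt -> Prop) (x : pt) : Prop :=
  exists (m : nat) (mu : 'I_m -> R) (p : 'I_m -> pt),
    \sum_(k < m) mu k = 1 /\ (forall k, A (p k)) /\ x = \sum_(k < m) mu k *: p k.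

Definition relint (A : pt -> Prop) (x : pt) : Prop :=
  A x /\ exists e, 0 < e /\ forall y, in_aff A y -> near_pt e x y -> A y.

Definition aff_dim (A : pt -> Prop) (k : nat) : Prop :=
  exists x0 : pt, A x0 /\
  exists V : 'M[R]_(k, n), row_free V /\ (forall i, A (x0 + row i V)) /\
    (forall x, A x -> (x - x0 <= V)%MS).

(* nonempty face of a closed convex set C : intersection with a supporting
   hyperplane (C itself is obtained with a = 0) *)
Definition is_face (C gam : pt -> Prop) : Prop :=
  (exists x, gam x) /\
  exists (a : pt) (t : R), (forall x, C x -> t <= dotv a x) /\
    (forall x, gam x <-> (C x /\ dotv a x = t)).

Definition expo (alpha : 'I_n -> nat) : pt := \row_i (alpha i)%:R.

(* Newton polyhedron of a function whose Taylor support at 0 is S: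
   convex hull of the union of alpha + R_+^n, alpha in S *)
Definition newton (S : ('I_n -> nat) -> Prop) : pt -> Prop :=
  conv (fun y => exists alpha, S alpha /\
                  forall i, expo alpha ord0 i <= y ord0 i).

Definition nonneg (a : pt) : Prop := forall i, 0 <= a ord0 i.

Definition lmin (S : ('I_n -> nat) -> Prop) (a : pt) (t : R) : Prop :=
  (exists x, newton S x /\ dotv a x = t) /\
  (forall x, newton S x -> t <= dotv a x).

Definition dual_cone (S : ('I_n -> nat) -> Prop) (gam : pt -> Prop) (a : pt)
  : Prop :=
  nonneg a /\ exists t, lmin S a t /\
    (forall x, (newton S x /\ dotv a x = t) <-> gam x).

Definition diag (d : R) : pt := const_mx d.

Definition is_dnum (S : ('I_n -> nat) -> Prop) (d : R) : Prop :=
  on_boundary (newton S) (diag d).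

Definition principal_face (S : ('I_n -> nat) -> Prop) (d : R)
  (tau : pt -> Prop) : Prop :=
  is_face (newton S) tau /\ relint tau (diag d).

Definition intpt (a : 'rV[int]_n) : pt := map_mx (fun z : int => z%:~R) a.

Definition cone_of (s : seq 'rV[int]_n) (x : pt) : Prop :=
  exists c : 'I_(size s) -> R, (forall j, 0 <= c j) /\
    x = \sum_(j < size s) c j *: intpt (nth 0 s j).

Definition completes_to_basis (s : seq 'rV[int]_n) : Prop :=
  exists (M : 'M[int]_n) (f : 'I_(size s) -> 'I_n),
    M \in unitmx /\ injective f /\ forall j, row (f j) M = nth 0 s j.

Definition same_set (A B : pt -> Prop) : Prop := forall x, A x <-> B x.

Definition is_fan (Sig : seq (seq 'rV[int]_n)) : Prop :=
  (forall s, s \in Sig -> forall gam, is_face (cone_of s) gam ->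
     exists2 s', s' \in Sig & same_set (cone_of s') gam) /\
  (forall s s', s \in Sig -> s' \in Sig ->
     is_face (cone_of s) (fun x => cone_of s x /\ cone_of s' x) /\
     is_face (cone_of s') (fun x => cone_of s x /\ cone_of s' x)).

Definition simplicial_subdivision (S : ('I_n -> nat) -> Prop)
  (Sig : seq (seq 'rV[int]_n)) : Prop :=
  is_fan Sig /\
  (forall x, nonneg x <-> exists2 s, s \in Sig & cone_of s x) /\
  (forall s, s \in Sig -> exists gam, is_face (newton S) gam /\
      forall x, cone_of s x -> closure (dual_cone S gam) x) /\
  (forall s, s \in Sig -> completes_to_basis s).

Definition inA (S : ('I_n -> nat) -> Prop) (d : R) (a : 'rV[int]_n) : Prop :=
  exists t, lmin S (intpt a) t /\ t != 0 /\
    - (sumv (intpt a)) / t = - (1 / d).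

Definition cardA (S : ('I_n -> nat) -> Prop) (d : R) (s : seq 'rV[int]_n)
  (k : nat) : Prop :=
  exists A : {set 'I_(size s)},
    (forall j, j \in A <-> inA S d (nth 0 s j)) /\ #|A| = k.

Definition top_cone (Sig : seq (seq 'rV[int]_n)) (s : seq 'rV[int]_n) : Prop :=
  s \in Sig /\ aff_dim (cone_of s) n.

Definition is_max_cardA (S : ('I_n -> nat) -> Prop) (d : R)
  (Sig : seq (seq 'rV[int]_n)) (m : nat) : Prop :=
  (exists s, top_cone Sig s /\ cardA S d s m) /\
  (forall s k, top_cone Sig s -> cardA S d s k -> (k <= m)%N).

End NewtonDefs.

(* Main.v *)
Require Import Defs.
From HB Require Import structures.
From mathcomp Require Import all_boot all_order all_algebra.
From mathcomp Require Import ring lra zify.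
From Stdlib Require Import Classical ClassicalEpsilon FunctionalExtensionality.
Set Implicit Arguments. Unset Strict Implicit. Unset Printing Implicit Defensive.
Import Order.TTheory GRing.Theory Num.Theory.
Local Open Scope ring_scope.

Section Basic.
Variables (R : realFieldType) (n : nat).
Implicit Types (a x y : 'rV[R]_n).

Lemma dotvE a x : dotv a x = (a *m x^T) 0 0.
Proof. by rewrite /dotv !mxE; apply: eq_bigr => i _; rewrite !mxE. Qed.

Lemma dotvDr a x y : dotv a (x + y) = dotv a x + dotv a y.
Proof. by rewrite /dotv -big_split; apply: eq_bigr => i _; rewrite mxE mulrDr. Qed.
Lemma dotvDl a x y : dotv (x + y) a = dotv x a + dotv y a.
Proof. by rewrite /dotv -big_split; apply: eq_bigr => i _; rewrite mxE mulrDl. Qed.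
Lemma dotvZr c a x : dotv a (c *: x) = c * dotv a x.
Proof. by rewrite /dotv mulr_sumr; apply: eq_bigr => i _; rewrite mxE mulrCA. Qed.
Lemma dotvZl c a x : dotv (c *: a) x = c * dotv a x.
Proof. by rewrite /dotv mulr_sumr; apply: eq_bigr => i _; rewrite mxE mulrA. Qed.
Lemma dotvNr a x : dotv a (- x) = - dotv a x.
Proof. by rewrite -scaleN1r dotvZr mulN1r. Qed.
Lemma dotvNl a x : dotv (- a) x = - dotv a x.
Proof. by rewrite -scaleN1r dotvZl mulN1r. Qed.
Lemma dotvBr a x y : dotv a (x - y) = dotv a x - dotv a y.
Proof. by rewrite dotvDr dotvNr. Qed.
Lemma dotvBl a x y : dotv (x - y) a = dotv x a - dotv y a.
Proof. by rewrite dotvDl dotvNl. Qed.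
Lemma dotvC a x : dotv a x = dotv x a.
Proof. by apply: eq_bigr => i _; rewrite mulrC. Qed.
Lemma dotv0r a : dotv a 0 = 0.
Proof. by rewrite /dotv big1 // => i _; rewrite mxE mulr0. Qed.
Lemma dotv0l a : dotv 0 a = 0.
Proof. by rewrite dotvC dotv0r. Qed.
Lemma dotv_sumr I (r : seq I) (P : pred I) (F : I -> 'rV[R]_n) a :
  dotv a (\sum_(i <- r | P i) F i) = \sum_(i <- r | P i) dotv a (F i).
Proof.
elim/big_rec2: _ => [|i y1 y2 _ <-]; first exact: dotv0r.
by rewrite dotvDr.
Qed.
Lemma dotv_suml I (r : seq I) (P : pred I) (F : I -> 'rV[R]_n) a :
  dotv (\sum_(i <- r | P i) F i) a = \sum_(i <- r | P i) dotv (F i) a.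
Proof. by rewrite dotvC dotv_sumr; apply: eq_bigr => i _; rewrite dotvC. Qed.

Lemma dotv_mulmx a (B : 'M[R]_(n, n)) : True. Proof. by []. Qed.

Lemma dotv_ge0 a x : nonneg a -> nonneg x -> 0 <= dotv a x.
Proof. by move=> ha hx; apply: sumr_ge0 => i _; apply: mulr_ge0. Qed.

Definition l1 x : R := \sum_(i < n) `|x ord0 i|.
Lemma l1_ge0 x : 0 <= l1 x.
Proof. by apply: sumr_ge0 => i _. Qed.

Lemma dotv_near a b x e : 0 <= e -> near_pt e a b ->
  `|dotv b x - dotv a x| <= e * l1 x.
Proof.
move=> he hab; rewrite -dotvBl /l1 mulr_sumr.
apply: le_trans (ler_norm_sum _ _ _) _; apply: ler_sum => i _.
rewrite normrM !mxE; apply: ler_wpM2r => //. exact: ltW (hab i).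
Qed.
End Basic.

Section Generic.
Variable R : realFieldType.

Lemma common_eps (T : eqType) (l : seq T) (P : T -> R -> Prop) :
  (forall x, x \in l -> exists2 e, 0 < e & forall e', 0 < e' -> e' <= e -> P x e') ->
  exists2 e, 0 < e & forall x, x \in l -> forall e', 0 < e' -> e' <= e -> P x e'.
Proof.
elim: l => [|x l IH] h; first by exists 1 => //.
have [e1 e10 he1] := h x (mem_head _ _).
have := IH; case=> [y hy|e2 e20 he2]; first by apply: h; rewrite in_cons hy orbT.
exists (Num.min e1 e2); first by rewrite lt_min e10 e20.
move=> y; rewrite in_cons => /orP [/eqP ->|hy] e' e'0 he'.
  by apply: he1 => //; apply: le_trans he' _; rewrite ge_min lexx.
by apply: he2 => //; apply: le_trans he' _; rewrite ge_min lexx orbT.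
Qed.

Lemma mulmx_dotv m p (z : 'rV[R]_m) (C : 'M[R]_(m, p)) j :
  (z *m C) ord0 j = dotv z (col j C)^T.
Proof. by rewrite dotvE !mxE; apply: eq_bigr => i _; rewrite !mxE. Qed.

Lemma near_sym m e (x y : 'rV[R]_m) : near_pt e x y -> near_pt e y x.
Proof. by move=> h i; rewrite distrC. Qed.

Lemma notin_open m p (K : 'M[R]_(p, m)) y : ~~ (y <= K)%MS ->
  exists2 e, 0 < e & forall z, near_pt e y z -> ~~ (z <= K)%MS.
Proof.
rewrite submxE => /eqP hy.
have [j hj] : exists j, (y *m cokermx K) ord0 j != 0.
  case: (boolP [exists j, (y *m cokermx K) ord0 j != 0]) => [/existsP //|].
  rewrite negb_exists => /forallP h; exfalso.
  apply: hy; apply/rowP => j; rewrite [RHS]mxE; have := h j; rewrite negbK; move/eqP. done.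
set C := cokermx K.
set x := (col j C)^T.
have hK0 : 0 <= l1 x by exact: l1_ge0.
set D := `|(y *m C) ord0 j|.
have D0 : 0 < D by rewrite normr_gt0.
exists (D / (l1 x + 1)); first by rewrite divr_gt0 // ltr_wpDl.
move=> z hz; rewrite submxE; apply/eqP => hz0.
have := dotv_near x (ltW (divr_gt0 D0 (ltr_wpDl hK0 ltr01))) hz.
rewrite -!mulmx_dotv hz0 mxE sub0r normrN -/D => h.
have : D / (l1 x + 1) * l1 x < D.
  by rewrite mulrAC ltr_pdivrMr ?ltr_wpDl // ltr_pM2l // ltrDl.
move: h; move: (D / (l1 x + 1) * l1 x) => E; lra.
Qed.


Lemma near_shrink m (c y : 'rV[R]_m) e : near_pt e c y ->
  exists2 dl, 0 < dl & forall z, near_pt dl y z -> near_pt e c z.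
Proof.
move=> h.
have := @common_eps _ (enum 'I_m)
  (fun i dl => forall z : 'rV[R]_m, `|z ord0 i - y ord0 i| < dl -> `|z ord0 i - c ord0 i| < e).
case=> [i _|dl dl0 hdl]; first exists (e - `|y ord0 i - c ord0 i|); first by rewrite subr_gt0.
  move=> e' _ he' z hz.
  have := ler_distD (y ord0 i) (z ord0 i) (c ord0 i).
  by move: (h i) he' hz; rewrite distrC; lra.
exists dl => // z hz i; exact: (hdl i (mem_enum _ _) dl dl0 (lexx _) z (hz i)).
Qed.

Lemma near_mono m (x y : 'rV[R]_m) e e' : e' <= e -> near_pt e' x y -> near_pt e x y.
Proof. by move=> h hn i; exact: lt_le_trans (hn i) h. Qed.

Lemma avoid m (Ks : seq 'M[R]_m) (c : 'rV[R]_m) e : 0 < e ->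
  (forall K, K \in Ks -> (\rank K < m)%N) ->
  exists y, near_pt e c y /\ forall K, K \in Ks -> ~~ (y <= K)%MS.
Proof.
move=> e0; elim: Ks => [|K Ks IH] hK.
  by exists c; split=> // i; rewrite subrr normr0.
have := IH; case=> [K' hK'|y1 [hy1 hav]]; first by apply: hK; rewrite in_cons hK' orbT.
have [d1 d10 hd1] := near_shrink hy1.
have := @common_eps _ Ks
  (fun K' dl => forall z, near_pt dl y1 z -> ~~ (z <= K')%MS).
case=> [K' hK'|d2 d20 hd2].
  have [dl dl0 hdl] := notin_open (hav K' hK').
  exists dl => // e' _ he' z hz; apply: hdl; exact: near_mono he' hz.
set dl := Num.min d1 d2.
have dl0 : 0 < dl by rewrite lt_min d10 d20.
have hdl1 : dl <= d1 by rewrite ge_min lexx.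
have hdl2 : dl <= d2 by rewrite ge_min lexx orbT.
have good : forall z, near_pt dl y1 z -> ~~ (z <= K)%MS ->
    exists y, near_pt e c y /\ forall K', K' \in K :: Ks -> ~~ (y <= K')%MS.
  move=> z hz hzK; exists z; split; first by apply: hd1; exact: near_mono hdl1 hz.
  move=> K'; rewrite in_cons => /orP [/eqP -> //|hK'].
  exact: hd2 K' hK' dl dl0 hdl2 z hz.
case hy1K : (y1 <= K)%MS; last first.
  by apply: (good y1) => [i|]; [rewrite subrr normr0 | rewrite hy1K].
have [i hi] : exists i, ~~ ((delta_mx 0 i : 'rV[R]_m) <= K)%MS.
  case: (boolP [exists i, ~~ ((delta_mx 0 i : 'rV[R]_m) <= K)%MS]) => [/existsP //|].
  rewrite negb_exists => /forallP hall; exfalso.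
  have h1 : (1%:M <= K)%MS by apply/row_subP => i; rewrite row1; have := hall i; rewrite negbK.
  have := mxrankS h1; rewrite mxrank1 leqNgt; by rewrite hK // mem_head.
apply: (good (y1 + (dl / 2) *: delta_mx 0 i)).
  move=> j; rewrite !mxE addrAC subrr add0r normrM.
  have h2 : 0 < dl / 2 by rewrite divr_gt0.
  rewrite gtr0_norm //=; case: (j == i) => /=; rewrite ?normr1 ?normr0 ?mulr1 ?mulr0; lra.
apply: contra hi => hyK.
have : ((y1 + (dl / 2) *: delta_mx 0 i) - y1 <= K)%MS.
  by apply: addmx_sub => //; rewrite eqmx_opp.
rewrite addrC addKr => h; have := scalemx_sub (dl / 2)^-1 h.
by rewrite scalerA mulVf ?scale1r // gt_eqF // divr_gt0.
Qed.
End Generic.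

Section Newt.
Variables (R : realFieldType) (n : nat) (S : ('I_n -> nat) -> Prop).
Implicit Types (a b x y : 'rV[R]_n).

Lemma sum_coord m (lam : 'I_m -> R) (p : 'I_m -> 'rV[R]_n) i :
  (\sum_(k < m) lam k *: p k) ord0 i = \sum_(k < m) lam k * p k ord0 i.
Proof. by rewrite summxE; apply: eq_bigr => k _; rewrite mxE. Qed.

Lemma expo_ge0 (alpha : 'I_n -> nat) i : 0 <= expo R alpha ord0 i.
Proof. by rewrite mxE. Qed.

Lemma newton_nonneg x : newton S x -> nonneg x.
Proof.
case=> m [lam [p [hl [h1 [hp ->]]]]] i.
rewrite sum_coord; apply: sumr_ge0 => k _; apply: mulr_ge0 => //.
have [al [_ hal]] := hp k; exact: le_trans (expo_ge0 _ _) (hal i).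
Qed.

Lemma newton_up x u : newton S x -> nonneg u -> newton S (x + u).
Proof.
case=> m [lam [p [hl [h1 [hp ->]]]]] hu.
exists m, lam, (fun k => p k + u); split=> //; split=> //; split.
  move=> k; have [al [Sal hal]] := hp k; exists al; split=> // i.
  rewrite [X in _ <= X]mxE -[X in X <= _]addr0; apply: lerD; [exact: hal|exact: hu].
rewrite -[X in _ + X]scale1r -h1 scaler_suml -big_split /=.
by apply: eq_bigr => k _; rewrite scalerDr.
Qed.

Lemma newton0 : ~ S (fun _ => 0%N) -> ~ newton S (0 : 'rV[R]_n).
Proof.
move=> HS0 [m [lam [p [hl [h1 [hp h0]]]]]].
have [k hk] : exists k, lam k != 0.
  apply/existsP; apply: contraT; rewrite negb_exists => /forallP h.
  by move: h1; rewrite big1 => [/esym/eqP|k _]; [rewrite oner_eq0 | apply/eqP/negPn].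
have [al [Sal hal]] := hp k; apply: HS0.
have -> : (fun _ : 'I_n => 0%N) = al.
  apply: functional_extensionality => i; apply/esym/eqP.
  have hs : \sum_(j < m) lam j * p j ord0 i = 0 by rewrite -sum_coord -h0 mxE.
  have : lam k * p k ord0 i == 0.
    move/eqP: hs; rewrite (bigD1 k) //= paddr_eq0.
    - by case/andP.
    - apply: mulr_ge0 => //; exact: le_trans (expo_ge0 _ _) (hal i).
    apply: sumr_ge0 => j _; apply: mulr_ge0 => //.
    have [al' [_ hal']] := hp j; exact: le_trans (expo_ge0 _ _) (hal' i).
  rewrite mulf_eq0 (negbTE hk) /= => /eqP hpk.
  have := hal i; rewrite hpk mxE => h.
  by rewrite lern0 in h.
done.
Qed.
End Newt.



Lemma rowsub_free (F : fieldType) m p q (f : 'I_m -> 'I_p) (A : 'M[F]_(p, q)) :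
  injective f -> row_free A -> row_free (rowsub f A).
Proof.
move=> fi /row_freeP [B hB]; apply/row_freeP.
exists (B *m (rowsub f 1%:M)^T); rewrite mulmxA mul_rowsub_mx hB.
apply/matrixP => i j; rewrite !mxE (bigD1 (f i)) //= big1 => [|l hl].
  by rewrite !mxE eqxx (inj_eq fi) mul1r addr0 eq_sym.
by rewrite !mxE eq_sym (negbTE hl) mul0r.
Qed.

Definition pb (P : Prop) : bool := if excluded_middle_informative P then true else false.
Lemma pbP (P : Prop) : pb P <-> P.
Proof. by rewrite /pb; case: excluded_middle_informative. Qed.

Section Main.
Variables (R : realFieldType) (n : nat) (S : ('I_n -> nat) -> Prop).
Variables (d : R) (tau : 'rV[R]_n -> Prop) (k : nat).
Hypothesis HS0 : ~ S (fun _ => 0%N).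
Hypothesis Htau : principal_face S d tau.
Variables (x0 : 'rV[R]_n) (V : 'M[R]_(k, n)).
Hypotheses (Hx0 : tau x0) (HVf : row_free V) (HVr : forall i, tau (x0 + row i V))
  (HVs : forall x, tau x -> (x - x0 <= V)%MS).
Variables (a0 : 'rV[R]_n) (t0 : R).
Hypotheses (Ha0le : forall x, newton S x -> t0 <= dotv a0 x)
  (Ha0tau : forall x, tau x <-> (newton S x /\ dotv a0 x = t0)).

Implicit Types (a b x y : 'rV[R]_n).
Local Notation p0 := (diag n d).

Definition inN b := forall x, newton S x -> dotv b p0 <= dotv b x.

Lemma p0E i : p0 ord0 i = d. Proof. by rewrite mxE. Qed.

Lemma tau_newton x : tau x -> newton S x.
Proof. by case/Ha0tau. Qed.

Lemma p0_tau : tau p0.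
Proof. by case: Htau => _ [] . Qed.

Lemma d_neq0 : d != 0.
Proof.
apply/eqP => d0; apply: (newton0 HS0); have := tau_newton p0_tau.
by congr newton; apply/matrixP => i j; rewrite !mxE d0.
Qed.

Lemma coord_le_l1 x i : `|x ord0 i| <= l1 x.
Proof.
rewrite /l1 (bigD1 i) //= -[X in X <= _]addr0 lerD //.
exact: sumr_ge0.
Qed.

Lemma tau_const b : inN b -> forall x, tau x -> dotv b x = dotv b p0.
Proof.
move=> hb x hx.
case: Htau => _ [_ [e [e0 he]]].
set D := l1 (x - p0).
have D0 : 0 <= D by exact: l1_ge0.
set s := e / (D + 1).
have s0 : 0 < s by rewrite divr_gt0 // ltr_wpDl.
set y := (1 + s) *: p0 - s *: x.
have hy : tau y.
  apply: he.
    exists 2%N, (fun j : 'I_2 => if val j == 0%N then 1 + s else - s),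
      (fun j : 'I_2 => if val j == 0%N then p0 else x).
    split; first by rewrite big_ord_recl big_ord1 /=; ring.
    split; first by move=> j; case: ifP => _; [exact: p0_tau|].
    by rewrite big_ord_recl big_ord1 /= scaleNr.
  move=> i.
  have -> : y ord0 i - p0 ord0 i =
    - (s * (x - p0) ord0 i) by rewrite /y !mxE; ring.
  rewrite normrN normrM gtr0_norm //.
  apply: (le_lt_trans (ler_wpM2l (ltW s0) (coord_le_l1 _ i))).
  rewrite /s -mulrA gtr_pMr // mulrC ltr_pdivrMr ?mul1r ?ltrDl //.
  by rewrite ltr_wpDl.
have := hb _ (tau_newton hy).
rewrite /y dotvBr !dotvZr => h1.
have h2 := hb _ (tau_newton hx).
apply/eqP; rewrite eq_le h2 andbT.
have : s * (dotv b x - dotv b p0) <= 0 by move: h1; rewrite mulrBr; lra.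
by rewrite pmulr_rle0 // subr_le0.
Qed.

Lemma tau_sub x : tau x -> (x - p0 <= V)%MS.
Proof.
move=> hx; have -> : x - p0 = (x - x0) - (p0 - x0) by rewrite opprB addrA subrK.
apply: addmx_sub; first exact: HVs.
rewrite eqmx_opp; exact: HVs p0_tau.
Qed.

Lemma inN_perp b : inN b -> forall v, (v <= V)%MS -> dotv b v = 0.
Proof.
move=> hb v /submxP [c ->].
rewrite mulmx_sum_row dotv_sumr big1 // => i _.
rewrite dotvZr; have h1 := tau_const hb (HVr i).
have h2 := tau_const hb Hx0.
rewrite dotvDr h2 in h1.
have -> : dotv b (row i V) = 0 by move: h1; lra.
by rewrite mulr0.
Qed.

Lemma dotv_delta a i : dotv a (delta_mx ord0 i) = a ord0 i.
Proof.
rewrite /dotv (bigD1 i) //= big1 ?addr0 => [|j hj]; first by rewrite mxE !eqxx mulr1.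
by rewrite mxE (negbTE hj) andbF mulr0.
Qed.

Lemma delta_nonneg i (c : R) : 0 <= c -> nonneg (c *: (delta_mx ord0 i : 'rV[R]_n)).
Proof. by move=> c0 j; rewrite !mxE mulr_ge0 // ler0n. Qed.

Lemma dotv_a0p0 : dotv a0 p0 = t0.
Proof. by case: (Ha0tau p0) => /(_ p0_tau) [] _. Qed.

Lemma a0_nonneg : nonneg a0.
Proof.
move=> i; rewrite leNgt; apply/negP => hi.
have c0 : 0 < (- a0 ord0 i)^-1 by rewrite invr_gt0 oppr_gt0.
have hx := newton_up (tau_newton p0_tau) (delta_nonneg i (ltW c0)).
have := Ha0le hx; rewrite dotvDr dotvZr dotv_delta dotv_a0p0.
have -> : (- a0 ord0 i)^-1 * a0 ord0 i = -1.
  by rewrite invrN mulNr mulVf ?ltr0_neq0.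
lra.
Qed.

Lemma a0_zero_sub (i : 'I_n) : a0 ord0 i = 0 -> ((delta_mx ord0 i : 'rV[R]_n) <= V)%MS.
Proof.
move=> h.
have hx := newton_up (tau_newton p0_tau) (delta_nonneg i (@ler01 R)).
have ht : tau (p0 + 1 *: delta_mx ord0 i).
  by apply/Ha0tau; split=> //; rewrite dotvDr dotvZr dotv_delta h mulr0 addr0 dotv_a0p0.
by have := tau_sub ht; rewrite addrC addKr scale1r.
Qed.

Lemma inN_a0 : inN a0.
Proof. by move=> x hx; rewrite dotv_a0p0; exact: Ha0le. Qed.

Lemma dotv_p0 (a : 'rV[R]_n) : dotv a p0 = sumv a * d.
Proof. by rewrite /dotv /sumv mulr_suml; apply: eq_bigr => i _; rewrite p0E. Qed.

Lemma inA_inN (a : 'rV[int]_n) : inA S d a -> inN (intpt R a).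
Proof.
case=> t [[_ hmin] [t0' h]] x hx.
have : sumv (intpt R a) * d = t.
  move: h; rewrite mulNr => /oppr_inj h.
  have := congr1 (fun z => z * t * d) h; rewrite /= mulfVK // => ->.
  by rewrite mul1r mulrAC mulVf ?mul1r // d_neq0.
by move=> he; rewrite dotv_p0 he; exact: hmin.
Qed.

Lemma inN_inA (a : 'rV[int]_n) : nonneg (intpt R a) -> intpt R a != 0 ->
  inN (intpt R a) -> inA S d a.
Proof.
move=> hnn hnz hN.
have hs : sumv (intpt R a) != 0.
  apply: contra hnz => /eqP /psumr_eq0P h; apply/eqP/matrixP => i j.
  by rewrite (ord1 i) [RHS]mxE h // => l _; exact: hnn.
exists (sumv (intpt R a) * d); split.
  split; first by exists p0; split; [exact: tau_newton p0_tau| exact: dotv_p0].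
  by move=> x hx; rewrite -dotv_p0; exact: hN.
split; first by rewrite mulf_neq0 // d_neq0.
by rewrite mulNr invfM mulrA divff // mul1r div1r.
Qed.


Lemma dotv_self_eq0 x : dotv x x = 0 -> x = 0.
Proof.
move=> /psumr_eq0P h; apply/matrixP => i j; rewrite (ord1 i) [RHS]mxE.
apply/eqP; rewrite -sqrf_eq0; apply/eqP; rewrite expr2 h // => l _.
by rewrite -expr2 sqr_ge0.
Qed.

Lemma NR_bound m (P : 'M[R]_(m, n)) : row_free P -> (forall i, inN (row i P)) ->
  (m <= n - k)%N.
Proof.
move=> hPf hPN.
have hcap : forall x, (x <= P)%MS -> (x <= V)%MS -> x = 0.
  move=> x /submxP [c hc] hxV; apply: dotv_self_eq0.
  rewrite {1}hc mulmx_sum_row dotv_suml big1 // => i _.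
  by rewrite dotvZl (inN_perp (hPN i) hxV) mulr0.
have h0 : (P :&: V)%MS = 0.
  apply/row_matrixP => i; rewrite row0; apply: hcap.
    exact: submx_trans (row_sub _ _) (capmxSl _ _).
  exact: submx_trans (row_sub _ _) (capmxSr _ _).
have := mxrank_sum_cap P V; rewrite h0 mxrank0 addn0 (eqnP hPf) (eqnP HVf).
move=> he; have := rank_leq_col (P + V)%MS; rewrite he.
by move=> h; lia.
Qed.

Variable Sig : seq (seq 'rV[int]_n).
Hypothesis HSig : simplicial_subdivision R S Sig.
Implicit Types (s : seq 'rV[int]_n).

Definition Rm (s : seq 'rV[int]_n) : 'M[R]_(size s, n) :=
  \matrix_(j < size s, l < n) intpt R (nth 0 s j) ord0 l.

Lemma row_Rm s j : row j (Rm s) = intpt R (nth 0 s j).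
Proof. by apply/rowP => l; rewrite !mxE. Qed.

Lemma cone_ofE s x : cone_of s x <->
  exists c : 'rV[R]_(size s), (forall j, 0 <= c ord0 j) /\ x = c *m Rm s.
Proof.
split.
  case=> c [hc ->]; exists (\row_j c j); split; first by move=> j; rewrite mxE.
  by rewrite mulmx_sum_row; apply: eq_bigr => j _; rewrite mxE row_Rm.
case=> c [hc ->]; exists (fun j => c ord0 j); split=> //.
by rewrite mulmx_sum_row; apply: eq_bigr => j _; rewrite row_Rm.
Qed.

Lemma Rm_free s : s \in Sig -> row_free (Rm s).
Proof.
move=> hs; case: HSig => _ [_ [_ hb]]; have [M [f [hM [fi hf]]]] := hb s hs.
have -> : Rm s = rowsub f (map_mx (fun z : int => z%:~R : R) M).
  apply/matrixP => j l; rewrite !mxE -hf !mxE //.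
apply: rowsub_free => //; rewrite row_free_unit unitmxE det_map_mx unitfE.
rewrite intr_eq0; apply: contraTneq hM; rewrite unitmxE => ->; by rewrite unitr0.
Qed.

Lemma ray_cone s (j : 'I_(size s)) : cone_of s (intpt R (nth 0 s j)).
Proof.
apply/cone_ofE; exists (delta_mx 0 j); split; first by move=> l; rewrite mxE ler0n.
by rewrite -rowE row_Rm.
Qed.

Lemma cone_nonneg s x : s \in Sig -> cone_of s x -> nonneg x.
Proof. by move=> hs hx; case: HSig => _ [hc _]; apply/hc; exists s. Qed.

Lemma ray_neq0 s (j : 'I_(size s)) : s \in Sig -> intpt R (nth 0 s j) != 0.
Proof.
move=> hs; apply/eqP => h.
have := row_free_inj (Rm_free hs) (_ : (delta_mx 0 j : 'rV[R]_(size s)) *m Rm s = 0 *m Rm s).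
rewrite -rowE row_Rm h mul0mx => /(_ erefl) /matrixP /(_ 0 j).
by rewrite !mxE !eqxx /= => /eqP; rewrite oner_eq0.
Qed.

Lemma vertex s : s \in Sig -> exists g, newton S g /\ forall b, cone_of s b -> forall x, newton S x -> dotv b g <= dotv b x.
Proof.
move=> hs; case: HSig => _ [_ [hcl _]]; have [gam [[[g hg] [a [t [_ hgam]]]] hsub]] := hcl s hs.
have gN : newton S g by case/hgam: hg.
exists g; split=> // b hb x hx.
rewrite leNgt; apply/negP => hlt.
set D := dotv b g - dotv b x.
have D0 : 0 < D by rewrite subr_gt0.
set K := l1 (x - g).
have K0 : 0 <= K by exact: l1_ge0.
have e0 : 0 < D / (K + 1) by rewrite divr_gt0 // ltr_wpDl.
have [c [[_ [t' [[_ hmin] hc]]] hnear]] := hsub b hb _ e0.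
have hcg : dotv c g = t' by have := (hc g).2 hg; case.
have h1 := hmin x hx.
have h2 := dotv_near (x - g) (ltW e0) hnear.
have hE : D / (K + 1) * K < D.
  by rewrite mulrAC ltr_pdivrMr ?ltr_wpDl // ltr_pM2l // ltrDl.
have hDe : D = dotv b g - dotv b x by [].
move: hE h2 h1; clearbody D; move: (D / (K+1) * K) => E hE.
rewrite !dotvBr hcg ler_norml => /andP [h2 h3] h1.
lra.
Qed.

Definition Nset s : {set 'I_(size s)} := [set j | pb (inN (row j (Rm s)))].
Definition NRmat s : 'M[R]_(#|Nset s|, n) := rowsub (fun i => enum_val i) (Rm s).

Lemma NRmat_free s : s \in Sig -> row_free (NRmat s).
Proof. by move=> hs; apply: rowsub_free (Rm_free hs); exact: enum_val_inj. Qed.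

Lemma NRmat_N s i : inN (row i (NRmat s)).
Proof.
by rewrite row_rowsub; have := enum_valP i; rewrite inE => /pbP.
Qed.

Lemma cone_N_sub s b : s \in Sig -> cone_of s b -> inN b -> (b <= NRmat s)%MS.
Proof.
move=> hs hb hN; have [g [gN hg]] := vertex hs.
case/cone_ofE: hb => c [hc hbe].
have hge j : dotv (row j (Rm s)) g <= dotv (row j (Rm s)) p0.
  by apply: hg; [rewrite row_Rm; exact: ray_cone | exact: tau_newton p0_tau].
have hsum : \sum_j c ord0 j * (dotv (row j (Rm s)) p0 - dotv (row j (Rm s)) g) <= 0.
  have := hN g gN; rewrite hbe mulmx_sum_row !dotv_suml.
  rewrite -subr_ge0 -sumrB => h.
  rewrite -oppr_ge0 -sumrN; apply: le_trans h _; apply: ler_sum => j _.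
  by rewrite !dotvZl mulrBr opprB.
have hz : forall j, c ord0 j * (dotv (row j (Rm s)) p0 - dotv (row j (Rm s)) g) = 0.
  move=> j; apply/eqP; move: hsum.
  have hnn : forall l, 0 <= c ord0 l * (dotv (row l (Rm s)) p0 - dotv (row l (Rm s)) g).
    by move=> l; apply: mulr_ge0 => //; rewrite subr_ge0.
  move=> hsum; rewrite eq_le hnn andbT.
  apply: le_trans hsum; rewrite (bigD1 j) //= -[X in X <= _]addr0 lerD //.
  exact: sumr_ge0.
rewrite hbe mulmx_sum_row; apply: summx_sub => j _.
have [c0|cn0] := eqVneq (c ord0 j) 0; first by rewrite c0 scale0r sub0mx.
apply: scalemx_sub.
have hjN : inN (row j (Rm s)).
  move=> x hx; have := hz j; move/eqP; rewrite mulf_eq0 (negbTE cn0) /= subr_eq0 => /eqP ->.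
  by apply: hg => //; rewrite row_Rm; exact: ray_cone.
have hj : j \in Nset s by rewrite inE; apply/pbP.
rewrite -(enum_rankK_in hj hj) -row_rowsub; exact: row_sub.
Qed.

Lemma cardA_le s m : s \in Sig -> cardA S d s m -> (m <= n - k)%N.
Proof.
move=> hs [A [hA <-]].
apply: (@NR_bound _ (rowsub (fun i => enum_val i) (Rm s))).
  by apply: rowsub_free (Rm_free hs); exact: enum_val_inj.
move=> i; rewrite row_rowsub row_Rm; apply: inA_inN; apply/hA; exact: enum_valP.
Qed.

Lemma cardA_N s : s \in Sig -> cardA S d s #|Nset s|.
Proof.
move=> hs; exists (Nset s); split=> // j; rewrite inE; split.
  move/pbP; rewrite row_Rm => hN; apply: inN_inA => //.
    exact: (cone_nonneg hs (ray_cone j)).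
  exact: ray_neq0.
by move/inA_inN => h; apply/pbP; rewrite row_Rm.
Qed.

Definition perpV (w : 'rV[R]_n) := w *m V^T = 0.

Lemma perpV_dot w v : perpV w -> (v <= V)%MS -> dotv w v = 0.
Proof.
move=> hw /submxP [c ->]; rewrite dotvE trmx_mul mulmxA.
by rewrite [w *m _]hw mul0mx mxE.
Qed.

Lemma L3 : exists2 eta, 0 < eta & forall w, perpV w -> near_pt eta 0 w ->
  nonneg (a0 + w) /\ inN (a0 + w).
Proof.
have := @common_eps R _ (enum 'I_n) (fun i eta => 0 < a0 ord0 i -> eta <= a0 ord0 i).
case=> [i _|e1 e10 he1].
  have [h|h] := ltP 0 (a0 ord0 i); first by exists (a0 ord0 i) => // e' _ he' _.
  by exists 1 => // e' _ _ h'; move: h h'; rewrite leNgt => /negP.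
have := @common_eps R _ Sig (fun s eta => exists g, newton S g /\
   (forall b, cone_of s b -> forall x, newton S x -> dotv b g <= dotv b x) /\
   (dotv a0 g = t0 \/ eta * l1 (g - p0) < dotv a0 g - t0)).
case=> [s hs|e2 e20 he2].
  have [g [gN hg]] := vertex hs.
  have [h|h] := eqVneq (dotv a0 g) t0.
    by exists 1 => // e' _ _; exists g; do !split => //; left.
  have hlt : 0 < dotv a0 g - t0 by rewrite subr_gt0 lt_neqAle eq_sym h Ha0le.
  have hK := l1_ge0 (g - p0).
  exists ((dotv a0 g - t0) / (l1 (g - p0) + 1)); first by rewrite divr_gt0 // ltr_wpDl.
  move=> e' e'0 he'; exists g; do !split => //; right.
  apply: le_lt_trans (ler_wpM2r hK he') _.
  by rewrite mulrAC ltr_pdivrMr ?ltr_wpDl // ltr_pM2l // ltrDl.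
exists (Num.min e1 e2); first by rewrite lt_min e10 e20.
have hm1 : Num.min e1 e2 <= e1 by rewrite ge_min lexx.
have hm2 : Num.min e1 e2 <= e2 by rewrite ge_min lexx orbT.
have hm0 : 0 < Num.min e1 e2 by rewrite lt_min e10 e20.
move=> w hw hnear.
have hwi : forall i, `|w ord0 i| < Num.min e1 e2.
  by move=> i; have := hnear i; rewrite mxE subr0.
have hnn : nonneg (a0 + w).
  move=> i; rewrite mxE; have := a0_nonneg i; rewrite le_eqVlt => /orP [/eqP h0|hp].
    have := perpV_dot hw (a0_zero_sub (esym h0)); rewrite dotv_delta => ->.
    by rewrite -h0 addr0.
  have := he1 i (mem_enum _ _) _ hm0 hm1 hp.
  have := hwi i; rewrite ltr_norml => /andP [h1 _] h2.
  lra.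
split=> // x hx.
case: HSig => _ [hcov _]; have [s hs hb] := (hcov _).1 hnn.
have [g [gN [hg hor]]] := he2 s hs _ hm0 hm2.
apply: le_trans (hg _ hb _ hx).
have h0 := dotv_a0p0.
case: hor => [ht|hlt].
  have htg : tau g by apply/Ha0tau.
  have := perpV_dot hw (tau_sub htg); rewrite dotvBr !dotvDl => hz.
  lra.
have hnr : near_pt (Num.min e1 e2) 0 w by [].
have := dotv_near (g - p0) (ltW hm0) hnr; rewrite dotv0l subr0 ler_norml => /andP [h1 _].
move: h1 hlt; rewrite !dotvBr !dotvDl; move: (Num.min e1 e2 * l1 (g - p0)) => E.
lra.
Qed.

Lemma cone_closed s (p : 'rV[R]_n) : s \in Sig -> \rank (Rm s) = n -> ~ cone_of s p ->
  exists2 dl, 0 < dl & forall z, near_pt dl p z -> ~ cone_of s z.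
Proof.
move=> hs hr hnp.
set A := Rm s; set C := pinvmx A.
have hfull : row_full A by rewrite /row_full hr.
have hpA : (p <= A)%MS by rewrite submx_full.
set u := p *m C.
have hpu : p = u *m A by rewrite /u mulmxKpV.
have [j hj] : exists j, u ord0 j < 0.
  case: (boolP [exists j, u ord0 j < 0]) => [/existsP //|].
  rewrite negb_exists => /forallP hall; exfalso; apply: hnp.
  by apply/cone_ofE; exists u; split=> // j; have := hall j; rewrite -leNgt.
set x := (col j C)^T.
have hK := l1_ge0 x.
have D0 : 0 < - u ord0 j by rewrite oppr_gt0.
exists (- u ord0 j / (l1 x + 1)); first by rewrite divr_gt0 // ltr_wpDl.
move=> z hz /cone_ofE [c [hc hze]].
have hzc : z *m C = c by rewrite hze /C mulmxKp //; exact: Rm_free.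
have := dotv_near x (ltW (divr_gt0 D0 (ltr_wpDl hK ltr01))) hz.
rewrite -!mulmx_dotv hzc -/u ler_norml => /andP [_ h2].
have := hc j.
have : - u ord0 j / (l1 x + 1) * l1 x < - u ord0 j.
  by rewrite mulrAC ltr_pdivrMr ?ltr_wpDl // ltr_pM2l // ltrDl.
move: h2; move: (- u ord0 j / (l1 x + 1) * l1 x) => E; lra.
Qed.

Lemma top_cover (p : 'rV[R]_n) : nonneg p -> exists s, [/\ s \in Sig, \rank (Rm s) = n & cone_of s p].
Proof.
move=> hp; apply: NNPP => hno.
have := @common_eps R _ Sig (fun s dl => (\rank (Rm s) < n)%N \/
   forall z, near_pt dl p z -> ~ cone_of s z).
case=> [s hs|dl dl0 hdl].
  have := rank_leq_col (Rm s); rewrite leq_eqVlt => /orP [/eqP hr|hr].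
    have [e e0 he] := cone_closed hs hr (fun hc => hno (ex_intro _ s (And3 hs hr hc))).
    by exists e => // e' _ he'; right => z hz; apply: he; exact: near_mono he' hz.
  by exists 1 => // e' _ _; left.
have dl20 : 0 < dl / 2 by rewrite divr_gt0.
have := @avoid R n [seq <<Rm s>>%MS | s <- Sig & (\rank (Rm s) < n)%N]
   (p + const_mx (dl / 2)) (dl / 2) dl20.
case=> [K /mapP [s]|y [hy hav]].
  by rewrite mem_filter => /andP [hr _] ->; rewrite mxrank_gen.
have hyn : nonneg y.
  move=> i; have := hy i; rewrite !mxE ltr_norml => /andP [h1 _].
  have := hp i; lra.
have hyp : near_pt dl p y.
  move=> i; have := hy i; rewrite !mxE ltr_norml => /andP [h1 h2].
  rewrite ltr_norml; apply/andP; split; lra.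
case: HSig => _ [hcov _]; have [s hs hsy] := (hcov _).1 hyn.
have := hdl s hs dl dl0 (lexx _); case=> [hr|hz]; last exact: hz hyp hsy.
have : (y <= <<Rm s>>)%MS.
  rewrite genmxE; case/cone_ofE: hsy => c [_ ->]; exact: submxMl.
apply/negP; apply: hav; apply/mapP; exists s => //; by rewrite mem_filter hr hs.
Qed.

Lemma top_aff s : s \in Sig -> \rank (Rm s) = n -> aff_dim (@cone_of R n s) n.
Proof.
move=> hs hr.
set A := Rm s; set C := pinvmx A.
have hfull : row_full A by rewrite /row_full hr.
set c0 : 'rV[R]_(size s) := \row_j \sum_i `|C i j|.
have hc0 j : forall i, 0 <= c0 ord0 j + C i j.
  move=> i; rewrite mxE (bigD1 i) //=.
  have h1 : 0 <= \sum_(i0 < n | i0 != i) `|C i0 j| by exact: sumr_ge0.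
  have h2 : - C i j <= `|C i j| by rewrite -normrN ler_norm.
  lra.
exists (c0 *m A); split.
  apply/cone_ofE; exists c0; split=> // j; rewrite mxE; exact: sumr_ge0.
exists 1%:M; split; first by rewrite row_free_unit unitmx1.
split; last by move=> x _; exact: submx1.
move=> i; apply/cone_ofE; exists (c0 + row i C); split.
  by move=> j; have := hc0 j i; rewrite !mxE.
rewrite mulmxDl; congr (_ + _).
have h1 : (row i (1%:M : 'M[R]_n) <= A)%MS by rewrite submx_full.
by rewrite -[LHS](mulmxKpV h1) -row_mul mul1mx.
Qed.

Definition psum s : 'rV[R]_n := (\row_l ((l \in Nset s)%:R : R)) *m Rm s.

Lemma psum_cone s : cone_of s (psum s).
Proof. by apply/cone_ofE; exists (\row_l ((l \in Nset s)%:R : R)); split=> // j; rewrite mxE ler0n. Qed.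

Lemma face_rays s s' : s \in Sig -> s' \in Sig -> cone_of s' (psum s) ->
  forall j, j \in Nset s -> cone_of s' (row j (Rm s)).
Proof.
move=> hs hs' hp j hj.
case: HSig => [[_ hfan] _]; have [[_ [a [t [hle hiff]]]] _] := hfan s s' hs hs'.
have ht : dotv a (psum s) = t by have [] := (hiff (psum s)).1 (conj (psum_cone s) hp).
have h0 : t <= 0.
  have := hle 0; rewrite dotv0r; apply; apply/cone_ofE; exists 0; split.
    by move=> l; rewrite mxE.
  by rewrite mul0mx.
have h2 : t <= 2 * t.
  have := hle (2 *: psum s); rewrite dotvZr ht; apply; apply/cone_ofE.
  exists (2 *: \row_l ((l \in Nset s)%:R : R)); split; last by rewrite -scalemxAl.
  by move=> l; rewrite !mxE mulr_ge0 // ler0n.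
have hr := hle _ (ray_cone j); rewrite -row_Rm in hr.
have hd : t <= dotv a (psum s - row j (Rm s)).
  apply: hle; apply/cone_ofE.
  exists (\row_l ((l \in Nset s)%:R : R) - delta_mx 0 j); split.
    move=> l; rewrite !mxE eqxx /=; case: (eqVneq l j) => [->|hne].
      by rewrite hj subrr.
    by rewrite subr0 ler0n.
  by rewrite mulmxBl -rowE.
have hF := (hiff (row j (Rm s))).2.
case: hF => //; split; first by rewrite row_Rm; exact: ray_cone.
move: hd; rewrite dotvBr ht; lra.
Qed.

Lemma L4 : exists2 s, s \in Sig & (n - k <= \rank (NRmat s))%N.
Proof.
set L := kermx V^T.
set Wm := row_base L.
have hm : \rank L = (n - k)%N by rewrite mxrank_ker mxrank_tr (eqnP HVf).
have hWL : (Wm :=: L)%MS by exact: eq_row_base.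
have hperpL : forall w, (w <= Wm)%MS -> perpV w.
  move=> w hw; apply/sub_kermxP; apply: submx_trans hw _; by rewrite hWL.
have ha0 : (a0 <= Wm)%MS.
  rewrite hWL; apply/sub_kermxP/rowP => j; rewrite mulmx_dotv tr_col trmxK mxE.
  exact: inN_perp inN_a0 _ (row_sub _ _).
set l0 := a0 *m pinvmx Wm.
have hl0 : l0 *m Wm = a0 by rewrite mulmxKpV.
clearbody l0.
have [eta eta0 heta] := L3.
have := @common_eps R _ (enum 'I_n) (fun i rho => rho * l1 (col i Wm)^T < eta).
case=> [i _|rho rho0 hrho].
  have hK := l1_ge0 (col i Wm)^T.
  exists (eta / (l1 (col i Wm)^T + 1)); first by rewrite divr_gt0 // ltr_wpDl.
  move=> e' _ he'; apply: le_lt_trans (ler_wpM2r hK he') _.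
  by rewrite mulrAC ltr_pdivrMr ?ltr_wpDl // ltr_pM2l // ltrDl.
set Kf := fun s => kermx (Wm *m cokermx (NRmat s)).
have := @avoid R _ [seq Kf s | s <- Sig & (\rank (Kf s) < \rank L)%N] l0 rho rho0.
case=> [K /mapP [s]|lam [hlam hav]].
  by rewrite mem_filter => /andP [hr _] ->.
set w := (lam - l0) *m Wm.
have hb : lam *m Wm = a0 + w by rewrite /w mulmxBl hl0 addrC subrK.
have hw : perpV w by apply: hperpL; exact: submxMl.
have hwn : near_pt eta 0 w.
  move=> i; rewrite [(0 : 'rV[R]_n) ord0 i]mxE subr0 /w mulmx_dotv.
  have hn : near_pt rho 0 (lam - l0) by move=> j; rewrite !mxE subr0; exact: hlam j.
  have := dotv_near (col i Wm)^T (ltW rho0) hn; rewrite dotv0l subr0 => h.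
  exact: le_lt_trans h (hrho i (mem_enum _ _) rho rho0 (lexx _)).
have [hnn hN] := heta w hw hwn.
rewrite -hb in hnn hN.
case: HSig => _ [hcov _]; have [s hs hsb] := (hcov _).1 hnn.
have hsub := cone_N_sub hs hsb hN.
have hlK : (lam <= Kf s)%MS.
  by apply/sub_kermxP; rewrite mulmxA; apply/eqP; rewrite -submxE.
have hfull : \rank (Kf s) = \rank L.
  apply/eqP; rewrite eqn_leq rank_leq_col /= leqNgt; apply/negP => hr.
  have hin : Kf s \in [seq Kf s | s <- Sig & (\rank (Kf s) < \rank L)%N].
    by apply/mapP; exists s => //; rewrite mem_filter hr hs.
  by have := hav _ hin; rewrite hlK.
have h1 : (1%:M <= Kf s)%MS by rewrite submx_full // /row_full hfull.
have hWN : (Wm <= NRmat s)%MS.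
  by rewrite submxE; move/sub_kermxP: h1; rewrite mul1mx => ->.
exists s => //; rewrite -hm -(eqnP (row_base_free L)); exact: mxrankS.
Qed.

Lemma exists_top : exists s, [/\ s \in Sig, \rank (Rm s) = n & #|Nset s| = (n - k)%N].
Proof.
have [s hs hr] := L4.
have hpn : nonneg (psum s) := cone_nonneg hs (psum_cone s).
have [s' [hs' hr' hc]] := top_cover hpn.
have hsub : (NRmat s <= NRmat s')%MS.
  apply/row_subP => i; apply: cone_N_sub => //; last exact: NRmat_N.
  rewrite row_rowsub; apply: face_rays => //; exact: enum_valP.
exists s'; split=> //; apply/eqP; rewrite eqn_leq.
rewrite (cardA_le hs' (cardA_N hs')) /=.
apply: leq_trans hr (leq_trans (mxrankS hsub) _); exact: rank_leq_row.
Qed.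

Lemma main_result : is_max_cardA S d Sig (n - k).
Proof.
split.
  have [s [hs hr hc]] := exists_top.
  exists s; split; first by split=> //; exact: top_aff.
  by rewrite -hc; exact: cardA_N.
by move=> s m [hs _]; exact: cardA_le.
Qed.
End Main.

Unset Implicit Arguments.

Theorem lemma9p3 (R : realFieldType) (n : nat)
  (S : ('I_n -> nat) -> Prop)
  (HSne : exists alpha, S alpha)
  (HS0 : ~ S (fun _ => 0%N))
  (Sig : seq (seq 'rV[int]_n))
  (HSig : simplicial_subdivision R S Sig)
  (d : R) (Hd : is_dnum S d)
  (tau : 'rV[R]_n -> Prop) (Htau : principal_face S d tau)
  (k : nat) (Hk : aff_dim tau k) :
  is_max_cardA S d Sig (n - k)%N.
Proof.
have Htau' := Htau.
case: Htau' => [[_ [a0 [t0 [Ha0le Ha0tau]]]] _].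
case: Hk => x0 [Hx0 [V [HVf [HVr HVs]]]].
exact: (main_result HS0 Htau Hx0 HVf HVr HVs Ha0le Ha0tau HSig).
Qed.
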